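(* Consider the boundary driven Kawasaki process on $\{0,1\}^N$ with $N\geq 5$ and $\mu_L>\kappa>0>\mu_R$, $|\mu_R|>\kappa$. For $x\in\mathcal{P}$, let $\mathcal{A}_x$ be the set consisting of $x$ and all its preferred successors. Then $\mathcal{A}_x$ is an attractor, and $\mathcal{A}_x\cap\mathcal{A}_y=\emptyset$ for all $y\in\mathcal{P}$ with $y\neq x$.
   Context: Configurations $x\in\{0,1\}^N$; energy $E(x)=-\kappa\sum_{i=1}^{N-1}x(i)x(i+1)$. $x^{i,j}$: occupations of $i,j$ exchanged; $x^i$ ($i\in\{1,N\}$): occupation of $i$ flipped. Transitions: for $|i-j|=1$, $x(i)\neq x(j)$, $x\to x^{i,j}$ at rate $\exp[-\frac\beta2(E(x^{i,j})-E(x))]$; for $i\in\{1,N\}$, $x\to x^i$ at rate $\exp[\frac{\beta\mu_i}{2}(1-2x(i))]\exp[-\frac\beta2(E(x^i)-E(x))]$, $\mu_1=\mu_L$, $\mu_N=\mu_R$. Two configurations are adjacent if one can jump to the other. For adjacent $x,y$: $\phi(x,y)=\lim_{\beta\to\infty}\frac1\beta\log k(x\to y)$, $\Gamma(x)=-\max_y\phi(x,y)$, $U(x,y)=-\phi(x,y)-\Gamma(x)$; $y$ is a preferred successor of $x$ if $U(x,y)=0$. For a path $D=(x_0,\dots,x_n)$ of adjacent configurations, $U(D)=\sum_m U(x_m,x_{m+1})$, and $\mathcal{U}(x,y)$ is the minimum of $U(D)$ over paths from $x$ to $y$. A non-empty set $A$ is an attractor if $\mathcal{U}(x,y)=0$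 for all $x\neq y\in A$ and $\mathcal{U}(x,y)>0$ for all $x\in A$, $y\notin A$. Writing a configuration by its blocks $(p_0,q_0,\dots,p_n,q_n)$ ($p_0$ occupied sites from site 1, then $q_0$ vacant, then $p_1$ occupied, etc.), $\mathcal{P}$ is the set of configurations with $p_i\geq 3$ for all $i$, $q_i\geq 3$ for $i<n$, and $q_n\geq 2$. *)

(* Defs.v *)
From HB Require Import structures.
From mathcomp Require Import all_boot all_order all_algebra.
From mathcomp Require Import all_classical all_reals all_analysis.
Set Implicit Arguments. Unset Strict Implicit. Unset Printing Implicit Defensive.
Import Order.TTheory GRing.Theory Num.Theory.
Import numFieldNormedType.Exports.
Local Open Scope ring_scope.
Local Open Scope classical_set_scope.

Section Kawasaki.
Variables (R : realType) (N : nat) (kappa muL muR : R).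

(* Configurations x in {0,1}^N; site s (1 <= s <= N) is the ordinal s-1. *)
Definition config := {ffun 'I_N -> bool}.

Definition occ (x : config) (i : nat) : bool :=
  if insub i is Some j then x j else false.

Definition energy (x : config) : R :=
  - kappa * \sum_(i < N.-1) ((occ x i && occ x i.+1) : nat)%:R.

Definition swap (x : config) (i j : 'I_N) : config :=
  [ffun k => if k == i then x j else if k == j then x i else x k].

Definition flip (x : config) (i : 'I_N) : config :=
  [ffun k => if k == i then ~~ x k else x k].

Definition boundary (i : 'I_N) : bool := (val i == 0%N) || (val i == N.-1).

Definition mu (i : 'I_N) : R := if val i == 0%N then muL else muR.

Definition rate (beta : R) (x y : config) : R :=
  \sum_(i : 'I_N) \sum_(j : 'I_N | (val j == (val i).+1) && (x i != x j)
                                    && (swap x i j == y))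
      expR (- (beta / 2) * (energy (swap x i j) - energy x))
  + \sum_(i : 'I_N | boundary i && (flip x i == y))
      (expR (beta * mu i / 2 * (1 - 2 * (x i : nat)%:R))
       * expR (- (beta / 2) * (energy (flip x i) - energy x))).

Definition can_jump (x y : config) : bool :=
  [exists i : 'I_N, exists j : 'I_N,
     (val j == (val i).+1) && (x i != x j) && (swap x i j == y)]
  || [exists i : 'I_N, boundary i && (flip x i == y)].

Definition adjacent (x y : config) : bool := can_jump x y || can_jump y x.

Definition phi (x y : config) : R :=
  lim ((fun beta : R => ln (rate beta x y) / beta) @ +oo).

Definition Gamma (x : config) : R :=
  - sup [set phi x y | y in [set y | adjacent x y]].

Definition U (x y : config) : R := - phi x y - Gamma x.

Definition preferred_successor (x y : config) : Prop :=
  adjacent x y /\ U x y = 0.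

(* U(D) for the path D = x :: D' *)
Definition path_cost (x : config) (D' : seq config) : R :=
  \sum_(c <- pairmap U x D') c.

Definition is_path (x y : config) (D' : seq config) : Prop :=
  path adjacent x D' /\ last x D' = y.

Definition calU (x y : config) : R :=
  inf [set path_cost x D' | D' in [set D' | is_path x y D']].

Definition attractor (A : set config) : Prop :=
  A !=set0 /\
  (forall x y, A x -> A y -> x <> y -> calU x y = 0) /\
  (forall x y, A x -> ~ A y -> 0 < calU x y).

Definition Aset (x : config) : set config :=
  [set y | y = x \/ preferred_successor x y].

End Kawasaki.

Definition occ_seq (N : nat) (x : config N) : seq bool := map x (enum 'I_N).

(* block description (p_0,q_0,...,p_n,q_n) *)
Definition blocks_seq (b : seq (nat * nat)) : seq bool :=
  flatten [seq nseq p.1 true ++ nseq p.2 false | p <- b].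

Definition inP (N : nat) (x : config N) : Prop :=
  exists b : seq (nat * nat),
    [/\ b != [::], occ_seq x = blocks_seq b,
        all (fun p => 3 <= p.1)%N b,
        all (fun p => 3 <= p.2)%N (take (size b).-1 b)
      & (2 <= (last (0%N, 0%N) b).2)%N].

(* Main.v *)
Require Import Defs.
From HB Require Import structures.
From mathcomp Require Import all_boot all_order all_algebra.
From mathcomp Require Import all_classical all_reals all_analysis.
From mathcomp Require Import zify ring lra.
Import Order.TTheory GRing.Theory Num.Theory.
Import Defs.
Local Open Scope ring_scope.
Local Open Scope classical_set_scope.

Ltac deceq1 := repeat match goal with
  | |- context [@eq_op ?T ?a ?b] =>
      let E := fresh "E" in
      first [ have E : (@eq_op T a b) = false by lia
            | have E : (@eq_op T a b) = true by lia ]; rewrite E; clear E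
  end.

Section Basic.
Context {N : nat}.
Implicit Types (x y : config N).

Lemma occ_ord x (i : 'I_N) : occ x i = x i.
Proof. by rewrite /occ valK. Qed.

Lemma occ_ge x k : (N <= k)%N -> occ x k = false.
Proof. by move=> h; rewrite /occ insubN // -leqNgt. Qed.

Lemma occ_swap x (I J : 'I_N) k :
  occ (swap x I J) k = if k == (I : nat) then x J else if k == (J : nat) then x I else occ x k.
Proof.
rewrite /occ; case: insubP => [K hK <-|hK]; first by rewrite ffunE.
have h1 := ltn_ord I; have h2 := ltn_ord J.
case: eqP => [e|_]; first by move: hK; rewrite e h1.
case: eqP => [e|_] //; by move: hK; rewrite e h2.
Qed.

Lemma occ_flip x (K : 'I_N) k :
  occ (flip x K) k = if k == (K : nat) then ~~ x K else occ x k.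
Proof.
rewrite /occ; case: insubP => [K' hK <-|hK].
  by rewrite ffunE -val_eqE; case: eqP => [/val_inj->|] //.
have h1 := ltn_ord K.
case: eqP => // e; move: hK; by rewrite e h1.
Qed.

Definition Bn x := (\sum_(0 <= k < N) (occ x k && occ x k.+1))%N.
Definition wl x j := ((0 < j)%N && occ x j.-1).

Lemma sum_local (F G : nat -> nat) a b n : (a <= b <= n)%N ->
  (forall k, (k < a)%N \/ (b <= k)%N -> F k = G k) ->
  (\sum_(0 <= k < n) F k + \sum_(a <= k < b) G k =
   \sum_(0 <= k < n) G k + \sum_(a <= k < b) F k)%N.
Proof.
move=> /andP[hab hbn] h.
have han := leq_trans hab hbn.
have eF : forall H : nat -> nat, (\sum_(0 <= k < n) H k =
   \sum_(0 <= k < a) H k + \sum_(a <= k < b) H k + \sum_(b <= k < n) H k)%N.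
  by move=> H; rewrite -!big_cat_nat.
rewrite !eF.
have e1 : (\sum_(0 <= k < a) F k = \sum_(0 <= k < a) G k)%N.
  by apply: eq_big_nat => k /andP[_ hk]; apply: h; left.
have e2 : (\sum_(b <= k < n) F k = \sum_(b <= k < n) G k)%N.
  by apply: eq_big_nat => k /andP[hk _]; apply: h; right.
rewrite e1 e2; lia.
Qed.

Lemma sum1 (F : nat -> nat) : (\sum_(0 <= k < 1) F k = F 0)%N.
Proof. by rewrite big_ltn // big_geq // addn0. Qed.
Lemma sum2 (F : nat -> nat) : (\sum_(0 <= k < 2) F k = F 0 + F 1)%N.
Proof. by rewrite big_ltn // big_ltn // big_geq // addn0. Qed.
Lemma sum2' (F : nat -> nat) i : (\sum_(i <= k < i.+2) F k = F i + F i.+1)%N.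
Proof. by rewrite big_ltn ?big_nat1 //; lia. Qed.
Lemma sum3 (F : nat -> nat) i : (\sum_(i <= k < i.+3) F k = F i + F i.+1 + F i.+2)%N.
Proof. by rewrite big_ltn ?(sum2' F i.+1) ?addnA //; lia. Qed.

Lemma Bn_swap x (I J : 'I_N) i : (I : nat) = i -> (J : nat) = i.+1 -> x I != x J ->
  (Bn (swap x I J) + ((wl x i && x I) + (x J && occ x i.+2)) =
   Bn x + ((wl x i && x J) + (x I && occ x i.+2)))%N.
Proof.
move=> hI hJ hne.
have hJN : (i.+1 < N)%N by rewrite -hJ ltn_ord.
have h1 : (i.-1 <= i.+2 <= N)%N by apply/andP; split; lia.
have h2 : forall k, (k < i.-1)%N \/ (i.+2 <= k)%N ->
   ((occ (swap x I J) k && occ (swap x I J) k.+1) : nat) = ((occ x k && occ x k.+1) : nat).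
  by move=> k hk; rewrite !occ_swap hI hJ; deceq1.
have E := @sum_local _ _ _ _ _ h1 h2; rewrite -/(Bn _) -/(Bn _) in E.
have oI : occ x i = x I by rewrite -hI occ_ord.
have oJ : occ x i.+1 = x J by rewrite -hJ occ_ord.
have sI : forall y, occ y i = y I by move=> y; rewrite -hI occ_ord.
have sJ : forall y, occ y i.+1 = y J by move=> y; rewrite -hJ occ_ord.
have yI : swap x I J I = x J by rewrite ffunE eqxx.
have yJ : swap x I J J = x I.
  rewrite ffunE; case: eqP => [e|_]; last by rewrite eqxx.
  by exfalso; move: hJ; rewrite e hI; lia.
move: E; rewrite /wl; case: i hI hJ {h1 h2} hJN oI oJ sI sJ => [|i'] hI hJ hJN oI oJ sI sJ.
- rewrite /= ?sum2 ?sum3 ?sum1 ?sum2' ?sI ?sJ ?yI ?yJ ?oI ?oJ.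
  rewrite !occ_swap hI hJ; deceq1.
  by move: hne; case: (x I); case: (x J); case: (occ x 2) => //= _; lia.
- rewrite /= ?sum2 ?sum3 ?sum1 ?sum2' ?sI ?sJ ?yI ?yJ ?oI ?oJ.
  rewrite !occ_swap hI hJ; deceq1.
  by move: hne; case: (x I); case: (x J); case: (occ x i'); case: (occ x i'.+3) => //= _; lia.
Qed.

Lemma Bn_flip x (K : 'I_N) i : (K : nat) = i ->
  (Bn (flip x K) + ((wl x i && x K) + (x K && occ x i.+1)) =
   Bn x + ((wl x i && ~~ x K) + (~~ x K && occ x i.+1)))%N.
Proof.
move=> hK.
have hKN : (i < N)%N by rewrite -hK ltn_ord.
have h1 : (i.-1 <= i.+1 <= N)%N by apply/andP; split; lia.
have h2 : forall k, (k < i.-1)%N \/ (i.+1 <= k)%N ->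
   ((occ (flip x K) k && occ (flip x K) k.+1) : nat) = ((occ x k && occ x k.+1) : nat).
  by move=> k hk; rewrite !occ_flip hK; deceq1.
have E := @sum_local _ _ _ _ _ h1 h2; rewrite -/(Bn _) -/(Bn _) in E.
have sK : forall y, occ y i = y K by move=> y; rewrite -hK occ_ord.
have yK : flip x K K = ~~ x K by rewrite ffunE eqxx.
move: E; rewrite /wl; case: i hK {h1 h2} hKN sK => [|i'] hK hKN sK.
- rewrite /= ?sum2 ?sum3 ?sum1 ?sum2' ?sK ?yK.
  rewrite !occ_flip hK; deceq1.
  by case: (x K); case: (occ x 1) => //=; lia.
- rewrite /= ?sum2 ?sum3 ?sum1 ?sum2' ?sK ?yK.
  rewrite !occ_flip hK; deceq1.
  by case: (x K); case: (occ x i'); case: (occ x i'.+2) => //=; lia.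
Qed.

End Basic.


Section Phi.
Variables (R : realType) (N : nat) (kappa muL muR : R).
Implicit Types (x y : config N).

Lemma energy_Bn x : energy kappa x = - kappa * (Bn x)%:R.
Proof.
rewrite /energy /Bn -natr_sum; congr (_ * _%:R).
rewrite -(big_mkord xpredT (fun i => (occ x i && occ x i.+1) : nat)).
case: N x => [|n] x //=.
rewrite big_nat_recr //= (occ_ge x n.+1 (leqnn _)) andbF addn0 //.
Qed.

Lemma ordE (A B : 'I_N) : (A == B) = (nat_of_ord A == nat_of_ord B).
Proof. by []. Qed.

Lemma swap_swap_eq x (I J I0 J0 : 'I_N) : (J : nat) = I.+1 -> x I != x J ->
  (J0 : nat) = I0.+1 -> x I0 != x J0 -> swap x I0 J0 = swap x I J -> I0 = I /\ J0 = J.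
Proof.
move=> hJ hne hJ0 hne0 /ffunP e.
have e1 := e I0; have e2 := e J0; rewrite !ffunE !ordE !eqxx in e1 e2.
have F1 : (nat_of_ord J0 == nat_of_ord I0) = false by lia.
rewrite F1 in e2.
case: (nat_of_ord I0 =P nat_of_ord I) => h1.
  by split; apply: val_inj => /=; lia.
move: e1 e2; rewrite ifF; last by apply/eqP.
case: (nat_of_ord I0 =P nat_of_ord J) => h2.
  have -> : (nat_of_ord J0 == nat_of_ord I) = false by lia.
  have -> : (nat_of_ord J0 == nat_of_ord J) = false by lia.
  by move=> _ e2; move: hne0; rewrite e2 eqxx.
by move=> e1; move: hne0; rewrite e1 eqxx.
Qed.

Lemma flip_neq_swap x (I J K : 'I_N) : (J : nat) = I.+1 -> x I != x J ->
  flip x K != swap x I J.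
Proof.
move=> hJ hne; apply/eqP => /ffunP e.
have e1 := e I; have e2 := e J; rewrite !ffunE !ordE in e1 e2.
rewrite eqxx in e1.
have F1 : (nat_of_ord J == nat_of_ord I) = false by lia.
rewrite F1 in e2.
rewrite eqxx in e2.
case: (nat_of_ord I =P nat_of_ord K) e1 e2 => h1.
  have -> : (nat_of_ord J == nat_of_ord K) = false by lia.
  by move=> _ e2; move: hne; rewrite e2 eqxx.
by move=> e1; move: hne; rewrite e1 eqxx.
Qed.

Lemma flip_inj x (K K0 : 'I_N) : flip x K0 = flip x K -> K0 = K.
Proof.
move=> /ffunP /(_ K0); rewrite !ffunE eqxx.
by case: eqP => // _; case: (x K0).
Qed.

Lemma rate_swap x (I J : 'I_N) beta : (J : nat) = I.+1 -> x I != x J ->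
  rate kappa muL muR beta x (swap x I J) =
  expR (- (beta / 2) * (energy kappa (swap x I J) - energy kappa x)).
Proof.
move=> hJ hne; rewrite /rate.
rewrite [X in _ + X]big1 ?addr0; last first.
  move=> K /andP[_ /eqP e]; by move: (@flip_neq_swap _ _ _ K hJ hne); rewrite e eqxx.
set F := fun I0 J0 : 'I_N => expR (- (beta / 2) * (energy kappa (swap x I0 J0) - energy kappa x)).
have inner : forall I0 : 'I_N,
  \sum_(J0 : 'I_N | (val J0 == (val I0).+1) && (x I0 != x J0) && (swap x I0 J0 == swap x I J))
     F I0 J0 = if I0 == I then F I J else 0.
  move=> I0; case: eqP => [->|ne].
    rewrite (big_pred1 J) // => J0 /=; apply/idP/idP.
      move=> /andP[/andP[/eqP h1 h2] /eqP h3].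
      by have [_ ->] := @swap_swap_eq _ _ _ _ _ hJ hne h1 h2 h3.
    move=> /eqP ->; rewrite hne eqxx andbT /= andbT; apply/eqP; exact: hJ.
  apply: big1 => J0 /andP[/andP[/eqP h1 h2] /eqP h3].
  by have [e _] := @swap_swap_eq _ _ _ _ _ hJ hne h1 h2 h3.
rewrite (eq_bigr _ (fun I0 _ => inner I0)) -big_mkcond big_pred1_eq //.
Qed.

Lemma rate_flip x (K : 'I_N) beta : boundary K ->
  rate kappa muL muR beta x (flip x K) =
  expR (beta * mu muL muR K / 2 * (1 - 2 * (x K : nat)%:R))
       * expR (- (beta / 2) * (energy kappa (flip x K) - energy kappa x)).
Proof.
move=> hb; rewrite /rate.
rewrite big1 ?add0r; last first.
  move=> I0 _; apply: big1 => J0 /andP[/andP[/eqP h1 h2] /eqP h3].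
  by move: (@flip_neq_swap _ _ _ K h1 h2); rewrite h3 eqxx.
rewrite (big_pred1 K) // => K0 /=; apply/idP/idP.
  by move=> /andP[_ /eqP /flip_inj ->].
by move=> /eqP ->; rewrite hb eqxx.
Qed.

Lemma phi_exp x y c :
  (forall beta : R, 0 < beta -> rate kappa muL muR beta x y = expR (beta * c)) ->
  phi kappa muL muR x y = c.
Proof.
move=> h; rewrite /phi; apply: norm_lim_near_cst.
near=> beta.
have hb : 0 < beta by near: beta; apply: nbhs_pinfty_gt; rewrite num_real.
rewrite h // expRK mulrC mulrA mulVf ?mul1r //; exact: lt0r_neq0.
Unshelve. all: by end_near.
Qed.

Lemma phi_swap x (I J : 'I_N) i : (I : nat) = i -> (J : nat) = i.+1 -> x I != x J ->
  phi kappa muL muR x (swap x I J) =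
  kappa / 2 * (((wl x i && x J) + (x I && occ x i.+2))%N%:R
               - ((wl x i && x I) + (x J && occ x i.+2))%N%:R).
Proof.
move=> hI hJ hne; apply: phi_exp => beta hb.
have hJ' : (J : nat) = I.+1 by rewrite hI.
rewrite rate_swap //; congr expR.
rewrite !energy_Bn.
have E := congr1 (fun n => n%:R : R) (@Bn_swap _ x _ _ _ hI hJ hne).
rewrite /= !natrD in E.
rewrite !natrD.
have -> : (Bn (swap x I J))%:R = (Bn x)%:R +
   (((wl x i && x J) : nat)%:R + ((x I && occ x i.+2) : nat)%:R) -
   (((wl x i && x I) : nat)%:R + ((x J && occ x i.+2) : nat)%:R) :> R by lra.
ring.
Qed.

Lemma phi_flip x (K : 'I_N) i : (K : nat) = i -> boundary K ->
  phi kappa muL muR x (flip x K) =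
  mu muL muR K / 2 * (1 - 2 * (x K : nat)%:R) +
  kappa / 2 * (((wl x i && ~~ x K) + (~~ x K && occ x i.+1))%N%:R
               - ((wl x i && x K) + (x K && occ x i.+1))%N%:R).
Proof.
move=> hK hb; apply: phi_exp => beta hbeta.
rewrite rate_flip // -expRD; congr expR.
rewrite !energy_Bn.
have E := congr1 (fun n => n%:R : R) (@Bn_flip _ x _ _ hK).
rewrite /= !natrD in E.
rewrite !natrD.
have -> : (Bn (flip x K))%:R = (Bn x)%:R +
   (((wl x i && ~~ x K) : nat)%:R + ((~~ x K && occ x i.+1) : nat)%:R) -
   (((wl x i && x K) : nat)%:R + ((x K && occ x i.+1) : nat)%:R) :> R by lra.
ring.
Qed.

End Phi.

Local Close Scope classical_set_scope.
Local Close Scope ring_scope.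

Ltac decif := repeat match goal with
  | |- context [if ?c then _ else _] =>
      let E := fresh "E" in
      first [ have E : c = true by lia
            | have E : c = false by lia ]; rewrite E; clear E
  end.

Definition blk p q (s : seq bool) := nseq p true ++ nseq q false ++ s.

Lemma nth_blk p q s i : nth false (blk p q s) i =
  if (i < p)%N then true else if (i < p + q)%N then false else nth false s (i - (p + q)).
Proof.
rewrite /blk !nth_cat !size_nseq !nth_nseq.
case: (ltnP i p) => h1 //.
case: (ltnP (i - p) q) => h2; case: (ltnP i (p + q)) => h3 //; try lia.
by rewrite subnDA.
Qed.

Lemma nth_blk_ge p q s i : nth false (blk p q s) (p + q + i) = nth false s i.
Proof. rewrite nth_blk; decif; congr nth; lia. Qed.

Lemma size_blk p q s : size (blk p q s) = (p + q + size s)%N.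
Proof. by rewrite /blk !size_cat !size_nseq addnA. Qed.

Definition Qs (s : seq bool) : Prop :=
  [/\ nth false s 0 && nth false s 1 && nth false s 2,
      (forall k, nth false s k.+2 -> ~~ nth false s k.+3 -> (k.+3 < size s)%N ->
          nth false s k && nth false s k.+1 && ~~ nth false s k.+4 && ~~ nth false s k.+4.+1),
      (forall k, ~~ nth false s k.+2 -> nth false s k.+3 ->
          ~~ nth false s k && ~~ nth false s k.+1 && nth false s k.+4 && nth false s k.+4.+1)
    & (2 <= size s)%N /\ ~~ nth false s (size s).-1 && ~~ nth false s (size s).-2].

Lemma Qs_blk p q s : (3 <= p)%N -> (s = [::] /\ (2 <= q)%N) \/ (Qs s /\ (3 <= q)%N) ->
  Qs (blk p q s).
Proof.
move=> hp hs.
have hq : (2 <= q)%N by case: hs => [[]|[]] _ h; lia.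
split.
- by rewrite !nth_blk; decif.
- move=> k h2 h3 hsz.
  case: (ltnP k.+2 (p + q)) => hk.
    have hk2 : (k.+2 < p)%N.
      by move: h2; rewrite nth_blk; case: (ltnP k.+2 p) => a; decif.
    have hk3 : k.+3 = p.
      move: h3; rewrite nth_blk; case: (ltnP k.+3 p) => b; decif => //; lia.
    rewrite !nth_blk; decif => /=.
    case: hs => [[-> hq']|[_ hq']]; last by decif.
    case: (ltnP k.+4.+1 (p + q)) => h5; decif => //.
    by rewrite nth_nil.
  case: hs => [[hs0 _]|[[Q1 Q2 Q3 Q4] hq']].
    by move: h2; rewrite hs0 nth_blk; decif; rewrite nth_nil.
  have [t ht] : exists t, k.+2 = (p + q + t)%N by exists (k.+2 - (p + q)); lia.
  move: Q1; case: t ht => [|[|t]] ht Q1.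
  - move: h3; rewrite (_ : k.+3 = p + q + 1)%N ?nth_blk_ge; last lia.
    by move/andP: Q1 => [/andP[_ ->]].
  - move: h3; rewrite (_ : k.+3 = p + q + 2)%N ?nth_blk_ge; last lia.
    by move/andP: Q1 => [_ ->].
  have hk' : k = (p + q + t)%N by lia.
  subst k; move: h2 h3 hsz; rewrite size_blk -!addnS !nth_blk_ge => h2 h3 hsz.
  apply: Q2 => //; lia.
- move=> k h2 h3.
  case: (ltnP k.+3 (p + q)) => hk.
    by move: h2 h3; rewrite !nth_blk; case: (ltnP k.+3 p) => a; decif.
  case: hs => [[hs0 _]|[[Q1 Q2 Q3 Q4] hq']].
    by move: h3; rewrite hs0 nth_blk; decif; rewrite nth_nil.
  have [t ht] : exists t, k.+3 = (p + q + t)%N by exists (k.+3 - (p + q)); lia.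
  case: t ht => [|[|[|t]]] ht.
  + rewrite !nth_blk; decif.
    rewrite (_ : k.+4 - (p + q) = 1)%N; last lia.
    rewrite (_ : k.+4.+1 - (p + q) = 2)%N; last lia.
    by move/andP: Q1 => [/andP[_ ->] ->].
  + move: h2; rewrite (_ : k.+2 = p + q + 0)%N ?nth_blk_ge; last lia.
    by move/andP: Q1 => [/andP[-> _] _].
  + move: h2; rewrite (_ : k.+2 = p + q + 1)%N ?nth_blk_ge; last lia.
    by move/andP: Q1 => [/andP[_ ->] _].
  have hk' : k = (p + q + t)%N by lia.
  subst k; move: h2 h3; rewrite -!addnS !nth_blk_ge => h2 h3.
  exact: Q3.
- rewrite size_blk; split; first lia.
  case: hs => [[-> hq']|[[Q1 Q2 Q3 [Q4 Q5]] hq']].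
    by rewrite !nth_blk /= addn0; decif.
  have e1 : (p + q + size s).-1 = (p + q + (size s).-1)%N by lia.
  have e2 : (p + q + size s).-2 = (p + q + (size s).-2)%N by lia.
  by rewrite e2 e1 !nth_blk_ge.
Qed.

Lemma Qs_blocks b : b != [::] -> all (fun p => 3 <= p.1)%N b ->
  all (fun p => 3 <= p.2)%N (take (size b).-1 b) -> (2 <= (last (0%N, 0%N) b).2)%N ->
  Qs (blocks_seq b).
Proof.
elim: b => // [[p q] b IH] _ /= /andP[hp hall].
case: b IH hall => [|c b] IH hall.
  move=> _ /= hq.
  have -> : blocks_seq [:: (p, q)] = blk p q [::] by rewrite /blocks_seq /blk /= !cats0.
  by apply: Qs_blk => //; left.
move=> /= /andP[hq htake] hlast.
have -> : blocks_seq [:: (p, q), c & b] = blk p q (blocks_seq (c :: b)).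
  by rewrite /blocks_seq /blk /= -catA.
apply: Qs_blk => //; right; split => //.
by apply: IH.
Qed.

Ltac clean := repeat match goal with
  | H : context [occ _ _] |- _ => clear H
  end.
Ltac deceq := repeat match goal with
  | |- context [@eq_op ?T ?a ?b] =>
      let E := fresh "E" in
      first [ have E : (@eq_op T a b) = false by clean; lia
            | have E : (@eq_op T a b) = true by clean; lia ]; rewrite E; clear E
  end.

Section Comb.
Context {N : nat}.
Implicit Types (x y z : config N).

Lemma occ_seq_nth x k : nth false (occ_seq x) k = occ x k.
Proof.
rewrite /occ_seq; case: (ltnP k N) => hk.
  rewrite (nth_map (Ordinal hk)) ?size_enum_ord //.
  have -> : nth (Ordinal hk) (enum 'I_N) k = Ordinal hk.
    by apply: val_inj; rewrite /= nth_enum_ord.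
  by rewrite -(occ_ord x (Ordinal hk)).
rewrite nth_default ?size_map; first by rewrite occ_ge.
by rewrite -enumT size_enum_ord.
Qed.

Lemma size_occ_seq x : size (occ_seq x) = N.
Proof. by rewrite size_map size_enum_ord. Qed.

Record PF x : Prop := {
  pf1 : occ x 0 && occ x 1 && occ x 2;
  pf2 : forall k, occ x k.+2 -> ~~ occ x k.+3 -> (k.+3 < N)%N ->
          occ x k && occ x k.+1 && ~~ occ x k.+4 && ~~ occ x k.+4.+1;
  pf3 : forall k, ~~ occ x k.+2 -> occ x k.+3 ->
          ~~ occ x k && ~~ occ x k.+1 && occ x k.+4 && occ x k.+4.+1;
  pf4 : (2 <= N)%N;
  pf5 : ~~ occ x N.-1 && ~~ occ x N.-2 }.

Lemma inP_PF x : inP x -> PF x.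
Proof.
move=> [b [hb he h1 h2 h3]].
have [Q1 Q2 Q3 [Q4 Q5]] := @Qs_blocks b hb h1 h2 h3.
rewrite -he !occ_seq_nth size_occ_seq in Q1 Q2 Q3 Q4 Q5.
split => //.
- by move=> k; have := Q2 k; rewrite !occ_seq_nth.
- by move=> k; have := Q3 k; rewrite !occ_seq_nth.
Qed.

Definition Dp x j := ((wl x j && occ x j.+1) + (occ x j && occ x j.+2))%N.
Definition Dm x j := ((wl x j && occ x j) + (occ x j.+1 && occ x j.+2))%N.

Lemma x_move x j : PF x -> (j.+1 < N)%N -> occ x j != occ x j.+1 -> (Dp x j).+1 = Dm x j.
Proof.
move=> [F1 F2 F3 F4 F5] hj hne.
case: j hj hne => [|[|k]] hj hne.
- by move: F1 hne; case: (occ x 0); case: (occ x 1); case: (occ x 2).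
- by move: F1 hne; case: (occ x 0); case: (occ x 1); case: (occ x 2).
rewrite /Dp /Dm /wl /=.
case ha: (occ x k.+2) hne => /= hne.
  have hb : occ x k.+3 = false by move: hne; case: (occ x k.+3).
  have := F2 k ha (negbT hb) hj.
  by rewrite hb; case: (occ x k); case: (occ x k.+1); case: (occ x k.+4).
have hb : occ x k.+3 = true by move: hne; case: (occ x k.+3).
have := F3 k (negbT ha) hb.
by rewrite hb; case: (occ x k); case: (occ x k.+1); case: (occ x k.+4).
Qed.

Lemma zfacts x (I J : 'I_N) : PF x -> (J : nat) = I.+1 -> x I != x J ->
  exists n a, (I : nat) = n.+2 /\
    [/\ occ x n = a, occ x n.+1 = a & occ x n.+2 = a] /\
    [/\ occ x n.+3 = ~~ a, occ x n.+4 = ~~ a & occ x n.+4.+1 = ~~ a].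
Proof.
move=> [F1 F2 F3 F4 F5] hJ hne.
have hJN : (J < N)%N := ltn_ord J.
rewrite -!occ_ord hJ in hne.
case hI: (nat_of_ord I) hne => [|[|k]] hne.
- by move: F1 hne; case: (occ x 0); case: (occ x 1); case: (occ x 2).
- by move: F1 hne; case: (occ x 0); case: (occ x 1); case: (occ x 2).
exists k, (occ x k.+2); split => //.
case ha: (occ x k.+2) hne => /= hne.
  have hb : occ x k.+3 = false by move: hne; case: (occ x k.+3).
  have := F2 k ha (negbT hb) (ltac:(lia)).
  by rewrite hb; case: (occ x k); case: (occ x k.+1); case: (occ x k.+4);
     case: (occ x k.+4.+1).
have hb : occ x k.+3 = true by move: hne; case: (occ x k.+3).
have := F3 k (negbT ha) hb.
by rewrite hb; case: (occ x k); case: (occ x k.+1); case: (occ x k.+4);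
   case: (occ x k.+4.+1).
Qed.

Section Z.
Variables (x z : config N) (n : nat) (a : bool).
Hypothesis hPF : PF x.
Hypothesis hz : forall k, occ z k =
  if k == n.+2 then occ x n.+3 else if k == n.+3 then occ x n.+2 else occ x k.
Hypothesis hn3 : (n.+3 < N)%N.
Hypotheses (h0 : occ x n = a) (h1 : occ x n.+1 = a) (h2 : occ x n.+2 = a)
  (h3 : occ x n.+3 = ~~ a) (h4 : occ x n.+4 = ~~ a) (h5 : occ x n.+4.+1 = ~~ a).

Lemma zv0 : occ z n = a. Proof. by rewrite hz; deceq. Qed.
Lemma zv1 : occ z n.+1 = a. Proof. by rewrite hz; deceq. Qed.
Lemma zv2 : occ z n.+2 = ~~ a. Proof. by rewrite hz eqxx. Qed.
Lemma zv3 : occ z n.+3 = a. Proof. by rewrite hz; deceq. Qed.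
Lemma zv4 : occ z n.+4 = ~~ a. Proof. by rewrite hz; deceq. Qed.
Lemma zv5 : occ z n.+4.+1 = ~~ a. Proof. by rewrite hz; deceq. Qed.

Lemma z_back : Dp z n.+2 = 1%N /\ Dm z n.+2 = 0%N.
Proof.
rewrite /Dp /Dm /wl /= zv1 zv2 zv3 zv4.
by case: a.
Qed.

Lemma z_other j : j != n.+2 -> (j.+1 < N)%N -> occ z j != occ z j.+1 ->
  (Dp z j <= Dm z j)%N.
Proof.
move=> hj hjN hne.
case: (ltnP j n) => hjn.
  have e : forall k, (k <= j.+2)%N -> occ z k = occ x k.
    by move=> k hk; rewrite hz; deceq.
  have e0 := e j.-1 (ltac:(clean; lia)); have e1 := e j (ltac:(clean; lia)).
  have e2 := e j.+1 (ltac:(clean; lia)); have e3 := e j.+2 (leqnn _).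
  have -> : Dp z j = Dp x j by rewrite /Dp /wl e0 e1 e2 e3.
  have -> : Dm z j = Dm x j by rewrite /Dm /wl e0 e1 e2 e3.
  rewrite e1 e2 in hne.
  by rewrite -(x_move x j hPF hjN hne).
case: (ltnP (n.+4) j) => hjn'.
  have e : forall k, (n.+4 <= k)%N -> occ z k = occ x k.
    by move=> k hk; rewrite hz; deceq.
  have e0 := e j.-1 (ltac:(clean; lia)); have e1 := e j (ltac:(clean; lia)).
  have e2 := e j.+1 (ltac:(clean; lia)); have e3 := e j.+2 (ltac:(clean; lia)).
  have -> : Dp z j = Dp x j by rewrite /Dp /wl e0 e1 e2 e3.
  have -> : Dm z j = Dm x j by rewrite /Dm /wl e0 e1 e2 e3.
  rewrite e1 e2 in hne.
  by rewrite -(x_move x j hPF hjN hne).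
have hcase : j = n \/ j = n.+1 \/ j = n.+3 \/ j = n.+4 by lia.
case: hcase => [e|[e|[e|e]]]; subst j; move: hne; rewrite /Dp /Dm /wl /=;
  rewrite ?zv0 ?zv1 ?zv2 ?zv3 ?zv4 ?zv5; case: a => //.
Qed.

End Z.

End Comb.


Section Reach.
Context {N : nat}.
Implicit Types (x y u v : config N).

Lemma swapK x (I J : 'I_N) : (J : nat) = I.+1 -> swap (swap x I J) I J = x.
Proof.
move=> hJ; apply/ffunP => k; rewrite !ffunE eqxx.
have hIJ : (J == I) = false by apply/eqP => e; move: hJ; rewrite e; lia.
rewrite hIJ eqxx.
by case: (k =P I) => [->|_] //; case: (k =P J) => [->|_].
Qed.

Lemma flipK x (K : 'I_N) : flip (flip x K) K = x.
Proof.
apply/ffunP => k; rewrite !ffunE.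
by case: (k =P K) => [->|_]; rewrite ?negbK.
Qed.

Lemma swapI x (I J : 'I_N) : (J : nat) = I.+1 -> swap x I J I = x J.
Proof. by move=> _; rewrite ffunE eqxx. Qed.

Lemma swapJ x (I J : 'I_N) : (J : nat) = I.+1 -> swap x I J J = x I.
Proof.
move=> hJ; rewrite ffunE eqxx.
have hIJ : (J == I) = false by apply/eqP => e; move: hJ; rewrite e; lia.
by rewrite hIJ.
Qed.

Lemma jump_swap x (I J : 'I_N) : (J : nat) = I.+1 -> x I != x J -> can_jump x (swap x I J).
Proof.
move=> hJ hne; apply/orP; left; apply/existsP; exists I; apply/existsP; exists J.
by rewrite hne eqxx andbT andbT; apply/eqP.
Qed.

Lemma jump_flip x (K : 'I_N) : boundary K -> can_jump x (flip x K).
Proof. by move=> hb; apply/orP; right; apply/existsP; exists K; rewrite hb eqxx. Qed.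

Lemma adj_swap x (I J : 'I_N) : (J : nat) = I.+1 -> x I != x J -> adjacent x (swap x I J).
Proof. by move=> hJ hne; rewrite /adjacent jump_swap. Qed.

Lemma adj_flip x (K : 'I_N) : boundary K -> adjacent x (flip x K).
Proof. by move=> hb; rewrite /adjacent jump_flip. Qed.

Lemma adj_sym : symmetric (@adjacent N).
Proof. by move=> x y; rewrite /adjacent orbC. Qed.

Lemma jump_cases u v : can_jump u v ->
  (exists I J : 'I_N, [/\ (J : nat) = I.+1, u I != u J & v = swap u I J]) \/
  (exists K : 'I_N, boundary K /\ v = flip u K).
Proof.
case/orP => [/existsP[I /existsP[J /andP[/andP[/eqP h1 h2] /eqP h3]]]|/existsP[K /andP[hb /eqP h]]].
  by left; exists I, J.
by right; exists K.
Qed.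

Lemma adj_cases u v : adjacent u v ->
  (exists I J : 'I_N, [/\ (J : nat) = I.+1, u I != u J & v = swap u I J]) \/
  (exists K : 'I_N, boundary K /\ v = flip u K).
Proof.
case/orP; first exact: jump_cases.
case/jump_cases => [[I [J [h1 h2 ->]]]|[K [hb ->]]].
  left; exists I, J; split => //; first by rewrite swapI ?swapJ // eq_sym.
  by rewrite swapK.
by right; exists K; rewrite flipK.
Qed.

Definition zero0 : config N := [ffun _ => false].
Definition Mw x := (\sum_(k : 'I_N) (x k : nat) * k.+1)%N.

Lemma M_flip x (K : 'I_N) : x K -> Mw x = (Mw (flip x K) + K.+1)%N.
Proof.
move=> hK; rewrite /Mw (bigD1 K) //= [X in _ = (X + _)%N](bigD1 K) //= ffunE eqxx hK /=.
have -> : (\sum_(i < N | i != K) (flip x K i : nat) * i.+1 =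
           \sum_(i < N | i != K) (x i : nat) * i.+1)%N.
  by apply: eq_bigr => k hk; rewrite ffunE (negbTE hk).
by rewrite mul1n mul0n add0n addnC.
Qed.

Lemma M_swap x (I J : 'I_N) : (J : nat) = I.+1 -> x I = false -> x J = true ->
  Mw x = (Mw (swap x I J)).+1.
Proof.
move=> hJ hI hJt.
have hJI : J != I by apply/eqP => e; move: hJ; rewrite e; lia.
rewrite /Mw (bigD1 I) //= [X in _ = X.+1](bigD1 I) //=.
rewrite (bigD1 J) //= [X in _ = (_ + X).+1](bigD1 J) //=.
rewrite swapI // swapJ // hI hJt.
have -> : (\sum_(i < N | (i != I) && (i != J)) (swap x I J i : nat) * i.+1 =
           \sum_(i < N | (i != I) && (i != J)) (x i : nat) * i.+1)%N.
  apply: eq_bigr => k /andP[h1 h2]; rewrite ffunE (negbTE h1) (negbTE h2) //.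
rewrite hJ /= !mul1n !mul0n !add0n addSn; reflexivity.
Qed.

Lemma step x : x != zero0 -> exists y, adjacent x y /\ (Mw y < Mw x)%N.
Proof.
move=> hx.
have ex : exists n, occ x n.
  case: (pickP (fun k : 'I_N => x k)) => [k hk|h]; first by exists k; rewrite occ_ord hk.
  have e : x = zero0 by apply/ffunP => k; rewrite ffunE; exact: h k.
  by move: hx; rewrite e eqxx.
have [n0 h0 hmin] := ex_minnP ex.
have hn0 : (n0 < N)%N by case: (ltnP n0 N) => // h; move: h0; rewrite occ_ge.
case: n0 h0 hmin hn0 => [|n1] h0 hmin hn0.
  pose K := Ordinal hn0.
  have hK : x K by rewrite -occ_ord.
  exists (flip x K); split; first by apply: adj_flip; rewrite /boundary eqxx.
  rewrite (M_flip x K hK); lia.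
have hn1 : (n1 < N)%N by lia.
pose I := Ordinal hn1; pose J := Ordinal hn0.
have hJ : (J : nat) = I.+1 by [].
have hIf : x I = false.
  apply/negP => hI.
  have hI' : occ x n1 by rewrite (occ_ord x I).
  have := hmin n1 hI'; lia.
have hJt : x J = true by rewrite -occ_ord.
exists (swap x I J); split; first by apply: adj_swap; rewrite // hIf hJt.
rewrite (M_swap x I J hJ hIf hJt); lia.
Qed.

Lemma conn x : connect (@adjacent N) x zero0.
Proof.
have : forall m x, (Mw x <= m)%N -> connect (@adjacent N) x zero0.
  elim=> [|m IH] y hy.
    case: (eqVneq y zero0) => [->|ne]; first exact: connect0.
    by have [w [_ hw]] := step y ne; lia.
  case: (eqVneq y zero0) => [->|ne]; first exact: connect0.
  have [w [hw1 hw2]] := step y ne.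
  apply: connect_trans (connect1 hw1) (IH _ _); lia.
by move=> /(_ (Mw x) x (leqnn _)).
Qed.

Lemma reach x y : exists D, path (@adjacent N) x D /\ last x D = y.
Proof.
have : connect (@adjacent N) x y.
  apply: connect_trans (conn x) _.
  by rewrite (sym_connect_sym adj_sym); exact: conn.
by case/connectP => D h1 h2; exists D.
Qed.

End Reach.

Local Open Scope ring_scope.
Local Open Scope classical_set_scope.

Section Main.
Variables (R : realType) (N : nat) (kappa muL muR : R).
Hypotheses (hN : (5 <= N)%N) (hL : kappa < muL) (hk : 0 < kappa) (hR : muR < 0)
  (hRk : kappa < `|muR|).
Implicit Types (x y u v w z : config N).

Lemma hRk' : kappa < - muR.
Proof. by rewrite -ltr0_norm. Qed.

Lemma N1ne0 : (N.-1 == 0%N) = false. Proof. move: hN; clear; lia. Qed.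
Lemma N1pos : (0 < N.-1)%N. Proof. move: hN; clear; lia. Qed.
Lemma N1S : (N <= N.-1.+1)%N. Proof. move: hN; clear; lia. Qed.

Ltac Lra := have := hk; have := hL; have := hR; have := hRk'; lra.

Definition mm := if kappa / 2 <= muL / 2 then
    (if kappa / 2 <= (- muR - kappa) / 2 then kappa / 2 else (- muR - kappa) / 2)
  else (if muL / 2 <= (- muR - kappa) / 2 then muL / 2 else (- muR - kappa) / 2).

Lemma mm_props : [/\ 0 < mm, mm <= kappa / 2, mm <= muL / 2 & mm <= (- muR - kappa) / 2].
Proof.
have := hRk'; rewrite /mm.
case: (lerP (kappa / 2) (muL / 2)) => h1;
case: (lerP (kappa / 2) ((- muR - kappa) / 2)) => h2;
case: (lerP (muL / 2) ((- muR - kappa) / 2)) => h3 h4; split; Lra.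
Qed.

Lemma phi_swap' u (I J : 'I_N) : (J : nat) = I.+1 -> u I != u J ->
  phi kappa muL muR u (swap u I J) = kappa / 2 * ((Dp u I)%:R - (Dm u I)%:R).
Proof.
move=> hJ hne.
rewrite (@phi_swap R N kappa muL muR u I J I erefl hJ hne) /Dp /Dm.
have oI : occ u I = u I := occ_ord u I.
have oJ : occ u I.+1 = u J by rewrite -hJ occ_ord.
by rewrite oI oJ.
Qed.

Lemma phi_flip' u (K : 'I_N) : boundary K ->
  phi kappa muL muR u (flip u K) =
  mu muL muR K / 2 * (1 - 2 * (occ u K : nat)%:R) +
  kappa / 2 * (((wl u K && ~~ occ u K) + (~~ occ u K && occ u K.+1))%N%:R
               - ((wl u K && occ u K) + (occ u K && occ u K.+1))%N%:R).
Proof.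
move=> hb; rewrite (@phi_flip R N kappa muL muR u K K erefl hb).
by rewrite occ_ord.
Qed.

Lemma Gamma_eq u g : (exists v, adjacent u v /\ phi kappa muL muR u v = g) ->
  (forall v, adjacent u v -> phi kappa muL muR u v <= g) -> Gamma kappa muL muR u = - g.
Proof.
move=> [v0 [hv0 e0]] hub; rewrite /Gamma; congr (- _).
apply/eqP; rewrite eq_le; apply/andP; split.
  apply: ge_sup; first by exists g; exists v0.
  by move=> r [y hy <-]; exact: hub.
have hS : has_ubound [set phi kappa muL muR u y | y in [set y | adjacent u y]].
  by exists g => r [y hy <-]; exact: hub.
by apply: (ub_le_sup hS); exists v0.
Qed.

Lemma U_ge0 u v : adjacent u v -> 0 <= U kappa muL muR u v.
Proof.
move=> huv; rewrite /U /Gamma.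
set S := [set phi kappa muL muR u y | y in [set y | adjacent u y]].
have hS : has_ubound S.
  exists (\sum_(y : config N) `|phi kappa muL muR u y|) => r [y hy <-].
  apply: le_trans (ler_norm _) _.
  by rewrite (bigD1 y) //= lerDl sumr_ge0.
have := ub_le_sup hS (ltac:(by exists v)); Lra.
Qed.

Lemma U_eq u v g : Gamma kappa muL muR u = - g -> U kappa muL muR u v = g - phi kappa muL muR u v.
Proof. by rewrite /U => ->; rewrite opprK addrC. Qed.

Lemma x_swap_val x (I J : 'I_N) : PF x -> (J : nat) = I.+1 -> x I != x J ->
  phi kappa muL muR x (swap x I J) = - kappa / 2.
Proof.
move=> hPF hJ hne.
rewrite phi_swap' //.
have hIN : (I.+1 < N)%N by rewrite -hJ ltn_ord.
have hne' : occ x I != occ x I.+1 by rewrite occ_ord -hJ occ_ord.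
rewrite -(x_move x I hPF hIN hne') -addn1 natrD; Lra.
Qed.

Lemma x_flip_val x (K : 'I_N) : PF x -> boundary K ->
  phi kappa muL muR x (flip x K) <= - kappa / 2 - mm.
Proof.
move=> [F1 F2 F3 F4 F5] hb; have [m0 m1 m2 m3] := mm_props.
rewrite phi_flip' //.
case/orP: hb => /eqP hK.
  have -> : mu muL muR K = muL by rewrite /mu hK eqxx.
  have hK' : (K : nat) = 0%N by [].
  rewrite /wl hK' /=.
  move: F1 => /andP[/andP[-> ->] _] /=; Lra.
have -> : mu muL muR K = muR by rewrite /mu hK N1ne0.
have hK' : (K : nat) = N.-1 by [].
rewrite /wl hK' (occ_ge x N.-1.+1 N1S).
move: F5 => /andP[/negbTE -> /negbTE h2]; rewrite N1pos /= h2 /=.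
have := hRk'; Lra.
Qed.

Lemma find_edge (f : nat -> bool) m : f 0%N -> ~~ f m ->
  exists j, [/\ (j < m)%N, f j & ~~ f j.+1].
Proof.
elim: m => [|m IH] h0 hm; first by rewrite h0 in hm.
case hfm: (f m); first by exists m; split.
have [j [hj h1 h2]] := IH h0 (negbT hfm); exists j; split => //; lia.
Qed.

Lemma Gamma_x x : PF x -> Gamma kappa muL muR x = kappa / 2.
Proof.
move=> hPF; have [F1 F2 F3 F4 F5] := hPF.
have [m0 m1 m2 m3] := mm_props.
have f0 : occ x 0 by move/andP: F1 => [/andP[]].
have fN : ~~ occ x N.-1 by move/andP: F5 => [].
have [j [hj h1 h2]] := @find_edge (occ x) N.-1 f0 fN.
have hjN : (j < N)%N by move: hj; clear; lia.
have hj1N : (j.+1 < N)%N by move: hj; clear; lia.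
pose I := Ordinal hjN; pose J := Ordinal hj1N.
have hJ : (J : nat) = I.+1 by [].
have hne : x I != x J by rewrite -(occ_ord x I) -(occ_ord x J) /= h1 (negbTE h2).
rewrite (@Gamma_eq x (- kappa / 2)); first by Lra.
  exists (swap x I J); split; first exact: (@adj_swap _ _ _ _ hJ hne).
  exact: x_swap_val.
move=> v hadj; case: (@adj_cases _ _ _ hadj) => [[I0 [J0 [hJ0 hne0 ->]]]|[K [hb ->]]].
  by rewrite x_swap_val.
have := x_flip_val x K hPF hb; Lra.
Qed.

Lemma pref_x x v : PF x -> preferred_successor kappa muL muR x v ->
  exists I J : 'I_N, [/\ (J : nat) = I.+1, x I != x J & v = swap x I J].
Proof.
move=> hPF [hadj hU].
case: (@adj_cases _ _ _ hadj) => // [[K [hb hv]]]; exfalso.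
move: hU; rewrite hv /U Gamma_x //.
have := x_flip_val x K hPF hb; have [m0 _ _ _] := mm_props; Lra.
Qed.

Lemma z_props x (I J : 'I_N) : PF x -> (J : nat) = I.+1 -> x I != x J ->
  phi kappa muL muR (swap x I J) x = kappa / 2 /\
  (forall v, adjacent (swap x I J) v -> v <> x -> phi kappa muL muR (swap x I J) v <= 0).
Proof.
move=> hPF hJ hne.
have [n [a [hI [[h0 h1 h2] [h3 h4 h5]]]]] := zfacts x I J hPF hJ hne.
have hn3 : (n.+3 < N)%N by have := ltn_ord J; rewrite hJ hI.
have oJ : x J = occ x n.+3 by rewrite -occ_ord hJ hI.
have oI : x I = occ x n.+2 by rewrite -occ_ord hI.
have xz : swap (swap x I J) I J = x := swapK x I J hJ.
have zI : swap x I J I != swap x I J J by rewrite swapI // swapJ // eq_sym.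
set z := swap x I J in xz zI *.
have hz : forall k, occ z k =
    if k == n.+2 then occ x n.+3 else if k == n.+3 then occ x n.+2 else occ x k.
  by move=> k; rewrite /z occ_swap hJ hI -oI -oJ.
split.
  have := phi_swap' z I J hJ zI; rewrite xz => ->.
  have [dp dm] := z_back x z n a hz hn3 h1 h2 h3 h4.
  rewrite hI dp dm; Lra.
move=> v hadj hvx.
case: (@adj_cases _ _ _ hadj) => [[I0 [J0 [hJ0 hne0 hv]]]|[K [hb hv]]]; rewrite hv.
  case: (eqVneq (nat_of_ord I0) n.+2) => hI0.
    exfalso; apply: hvx.
    have eI : I0 = I by apply: val_inj; rewrite /= hI0 hI.
    have eJ : J0 = J by apply: val_inj; rewrite /= hJ0 hJ eI.
    by rewrite hv eI eJ xz.
  have hI0N : (I0.+1 < N)%N by rewrite -hJ0 ltn_ord.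
  have hne0' : occ z I0 != occ z I0.+1 by rewrite occ_ord -hJ0 occ_ord.
  have := z_other x z n a hPF hz hn3 h0 h1 h2 h3 h4 h5 I0 hI0 hI0N hne0'.
  rewrite -(ler_nat R) phi_swap' // => hle.
  have := hk; nra.
have [F1 F2 F3 F4 F5] := hPF.
rewrite phi_flip' //.
case/orP: hb => /eqP hK.
  have -> : mu muL muR K = muL by rewrite /mu hK eqxx.
  have hK' : (K : nat) = 0%N by [].
  have oz0 : occ z 0 = true.
    by rewrite hz; deceq; move/andP: F1 => [/andP[-> _] _].
  rewrite /wl hK' oz0 /=.
  case: (occ z 1); rewrite /= ?add0n ?addn0 ?mulr0n ?mulr1n; Lra.
have -> : mu muL muR K = muR by rewrite /mu hK N1ne0.
have hK' : (K : nat) = N.-1 by [].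
have ozN : occ z N.-1 = false.
  rewrite hz.
  case: (N.-1 =P n.+2) => e1; first by move: hn3 e1; clear; lia.
  case: (N.-1 =P n.+3) => e2.
    move: F5; rewrite e2 /= h3 h2; by case: (a).
  by move/andP: F5 => [/negbTE -> _].
rewrite /wl hK' (occ_ge z N.-1.+1 N1S) ozN N1pos /=.
case: (occ z N.-2); rewrite /= ?add0n ?addn0 ?mulr0n ?mulr1n; Lra.
Qed.

Lemma Gamma_z x (I J : 'I_N) : PF x -> (J : nat) = I.+1 -> x I != x J ->
  Gamma kappa muL muR (swap x I J) = - (kappa / 2).
Proof.
move=> hPF hJ hne.
have [e1 e2] := z_props x I J hPF hJ hne.
have zI : swap x I J I != swap x I J J by rewrite swapI // swapJ // eq_sym.
apply: Gamma_eq.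
  exists x; split => //.
  have := @adj_swap _ _ _ _ hJ zI; by rewrite swapK.
move=> v hadj; case: (eqVneq v x) => [->|hv]; first by rewrite e1.
have := e2 v hadj (fun e => (negP hv) (introT eqP e)); Lra.
Qed.

Lemma cost_cons u v D : path_cost kappa muL muR u (v :: D) =
  U kappa muL muR u v + path_cost kappa muL muR v D.
Proof. by rewrite /path_cost /= big_cons. Qed.

Lemma cost_nil u : path_cost kappa muL muR u [::] = 0.
Proof. by rewrite /path_cost /= big_nil. Qed.

Lemma cost_nonneg D u : path (@adjacent N) u D -> 0 <= path_cost kappa muL muR u D.
Proof.
elim: D u => [|v D IH] u /=; first by rewrite cost_nil.
move=> /andP[h1 h2]; rewrite cost_cons.
have := U_ge0 _ _ h1; have := IH v h2; Lra.
Qed.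

Lemma exitU x u v : PF x -> Aset kappa muL muR x u -> adjacent u v ->
  ~ Aset kappa muL muR x v -> mm <= U kappa muL muR u v.
Proof.
move=> hPF hu huv hv; have [m0 m1 m2 m3] := mm_props.
case: hu => [eu|hu].
  subst u.
  case: (@adj_cases _ _ _ huv) => [[I [J [hJ hne ev]]]|[K [hb ev]]].
    exfalso; apply: hv; right; split => //.
    by rewrite /U Gamma_x // ev x_swap_val //; Lra.
  rewrite /U Gamma_x // ev; have := x_flip_val x K hPF hb; Lra.
have [I [J [hJ hne eu]]] := pref_x _ _ hPF hu.
have hvx : v <> x by move=> e; apply: hv; left.
have [_ e2] := z_props x I J hPF hJ hne.
rewrite eu in huv *.
rewrite /U Gamma_z //; have := e2 v huv hvx; Lra.
Qed.

Lemma exit_cost x D u : PF x -> Aset kappa muL muR x u -> path (@adjacent N) u D ->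
  ~ Aset kappa muL muR x (last u D) -> mm <= path_cost kappa muL muR u D.
Proof.
move=> hPF; elim: D u => [|v D IH] u hu /=; first by move=> _ [].
move=> /andP[h1 h2] hl; rewrite cost_cons.
case: (pselect (Aset kappa muL muR x v)) => hv.
  have := IH v hv h2 hl; have := U_ge0 _ _ h1; Lra.
have := exitU _ _ _ hPF hu h1 hv; have := cost_nonneg _ _ h2; Lra.
Qed.

Lemma calU_zero u w D : path (@adjacent N) u D -> last u D = w ->
  path_cost kappa muL muR u D = 0 -> calU kappa muL muR u w = 0.
Proof.
move=> h1 h2 h3; rewrite /calU.
set S := [set path_cost kappa muL muR u D | D in [set D | is_path u w D]].
have hS0 : S 0 by exists D.
have lb : lbound S 0 by move=> r [D' [h1' h2'] <-]; exact: cost_nonneg.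
apply/eqP; rewrite eq_le; apply/andP; split.
  have hlb : has_lbound S by exists 0.
  exact: (ge_inf hlb) _ hS0.
by apply: lb_le_inf => //; exists 0.
Qed.

Lemma calU_pos x u y : PF x -> Aset kappa muL muR x u -> ~ Aset kappa muL muR x y ->
  mm <= calU kappa muL muR u y.
Proof.
move=> hPF hu hy; rewrite /calU; apply: lb_le_inf.
  have [D [h1 h2]] := reach u y.
  by exists (path_cost kappa muL muR u D); exists D.
move=> r [D [h1 h2] <-]; apply: (exit_cost _ _ _ hPF hu h1); by rewrite h2.
Qed.

Lemma pref_props x w : PF x -> preferred_successor kappa muL muR x w ->
  [/\ adjacent w x, U kappa muL muR w x = 0, phi kappa muL muR w x = kappa / 2 &
   forall v, adjacent w v -> v <> x -> phi kappa muL muR w v <= 0].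
Proof.
move=> hPF hw.
have [I [J [hJ hne ew]]] := pref_x _ _ hPF hw.
have [e1 e2] := z_props x I J hPF hJ hne.
have zI : swap x I J I != swap x I J J by rewrite swapI // swapJ // eq_sym.
rewrite ew; split => //.
- by have := @adj_swap _ _ _ _ hJ zI; rewrite swapK.
- by rewrite /U Gamma_z // e1; Lra.
Qed.

Lemma attr x : PF x -> attractor kappa muL muR (Aset kappa muL muR x).
Proof.
move=> hPF; split; first by exists x; left.
split.
  move=> u w hu hw huw.
  case: hu => [eu|hu]; case: hw => [ew|hw].
  - by exfalso; apply: huw; rewrite eu ew.
  - subst u; have [hadj hU] := hw.
    apply: (@calU_zero _ _ [:: w]); first by rewrite /= hadj.
      by [].
    by rewrite cost_cons cost_nil hU addr0.
  - subst w; have [ha hU _ _] := pref_props _ _ hPF hu.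
    apply: (@calU_zero _ _ [:: x]); first by rewrite /= ha.
      by [].
    by rewrite cost_cons cost_nil hU addr0.
  - have [ha hU _ _] := pref_props _ _ hPF hu; have [hadj hU'] := hw.
    apply: (@calU_zero _ _ [:: x; w]); first by rewrite /= ha hadj.
      by [].
    by rewrite !cost_cons cost_nil hU hU' !addr0.
move=> u y hu hy; have [m0 _ _ _] := mm_props.
have := calU_pos _ _ _ hPF hu hy; Lra.
Qed.

Lemma disj x y : PF x -> PF y -> y <> x ->
  Aset kappa muL muR x `&` Aset kappa muL muR y = set0.
Proof.
move=> hx hy hyx; apply/seteqP; split => v; last by [].
move=> [hvx hvy]; exfalso.
have key : forall a b : config N, PF a -> PF b -> preferred_successor kappa muL muR b a -> False.
  move=> a b ha hb hab.
  have [I [J [hJ hne ea]]] := pref_x _ _ hb hab.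
  have [_ _ e1 _] := pref_props _ _ hb hab.
  have zI : a I != a J by rewrite ea swapI // swapJ // eq_sym.
  have eb : b = swap a I J by rewrite ea swapK.
  have := x_swap_val a I J ha hJ zI; rewrite -eb e1; Lra.
case: hvx => [ex|px]; case: hvy => [ey|py].
- by apply: hyx; rewrite -ey -ex.
- by subst v; exact: (key x y hx hy py).
- by subst v; exact: (key y x hy hx px).
have [_ _ e1 _] := pref_props _ _ hy py.
have [_ _ _ e2] := pref_props _ _ hx px.
have hadj : adjacent v y by have [] := pref_props _ _ hy py.
have := e2 y hadj hyx; rewrite e1; Lra.
Qed.

Lemma main_lemma x : inP x ->
  attractor kappa muL muR (Aset kappa muL muR x) /\
  (forall y : config N, inP y -> y <> x ->
     Aset kappa muL muR x `&` Aset kappa muL muR y = set0).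
Proof.
move=> hx; split; first exact: attr _ (inP_PF _ hx).
move=> y hy hyx; exact: disj _ _ (inP_PF _ hx) (inP_PF _ hy) hyx.
Qed.

End Main.

Theorem corollary1 (R : realType) (N : nat) (kappa muL muR : R)
  (hN : (5 <= N)%N) (hL : kappa < muL) (hk : 0 < kappa) (hR : muR < 0)
  (hRk : kappa < `|muR|) (x : config N) (hx : inP x) :
  attractor kappa muL muR (Aset kappa muL muR x) /\
  (forall y : config N, inP y -> y <> x ->
     Aset kappa muL muR x `&` Aset kappa muL muR y = set0).
Proof. by apply: main_lemma. Qed.
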